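(* Let $N\ge1$, $\alpha>0$, $\tau_0\ge0$, let $c_1,\dots,c_N\in\mathbb{C}\setminus\{0\}$ and let $\mu_1,\dots,\mu_N\in\mathbb{C}$ be pairwise distinct. For $\lambda\in\mathbb{C}$ put $k_i:=\lambda+\mu_i$ and let $\mathcal{S}:=\{\lambda\in\mathbb{C}:k_i^2=k_j^2\text{ for some }i\neq j\}$. On $Y:=C([-1,1];\mathbb{C})$ define $(K_iq)(x):=\int_{-1}^1e^{-k_i|x-r|}q(r)\,dr$ and $$\Delta(\lambda)q:=(\lambda+\alpha)e^{\lambda\tau_0}q-\sum_{i=1}^Nc_iK_iq .$$ Let $\lambda\notin\mathcal{S}$. Then there exist unique vectors $\zeta=[\zeta_0,\dots,\zeta_{N-1}]\in\mathbb{C}^N$ and $\beta=[\beta_0,\dots,\beta_N]\in\mathbb{C}^{N+1}$, depending on $\lambda$, such that for every $q\in C^{2N}([-1,1];\mathbb{C})$ $$(\zeta_0+\zeta_1D_x^2+\dots+\zeta_{N-1}D_x^{2N-2}+D_x^{2N})\,\Delta(\lambda)q=(\beta_0+\beta_1D_x^2+\dots+\beta_{N-1}D_x^{2N-2}+\beta_ND_x^{2N})\,q$$ on $[-1,1]$.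
   Context: $D_x$ denotes differentiation with respect to $x\in[-1,1]$. The operator $\Delta(\lambda)$ is $e^{\lambda\tau_0}$ times the characteristic operator $q\mapsto(\lambda+\alpha)q(x)-\int_{-1}^1J(x,r)e^{-\lambda\tau_0-\lambda|x-r|}q(r)\,dr$ of the linearised neural field equation with connectivity $J(x,r)=\sum_ic_ie^{-\mu_i|x-r|}$ and delay $\tau(x,r)=\tau_0+|x-r|$. *)

(* Defs.v *)
From Stdlib Require Import Reals.
From Coquelicot Require Import Coquelicot.
Open Scope R_scope.

Definition I11 (x : R) : Prop := -1 <= x <= 1.

Definition Cexp (z : C) : C :=
  (exp (Re z) * cos (Im z), exp (Re z) * sin (Im z)).

Definition is_deriv_on_I (f g : R -> C) : Prop :=
  forall x, I11 x ->
    filterlim (fun y => Cmult (RtoC (/ (y - x))) (Cminus (f y) (f x)))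
      (within (fun y => I11 y /\ y <> x) (locally x)) (locally (g x)).

Definition cont_on_I (f : R -> C) : Prop :=
  forall x, I11 x -> filterlim f (within I11 (locally x)) (locally (f x)).

Definition deriv_chain (n : nat) (d : nat -> R -> C) : Prop :=
  forall j, (j < n)%nat -> is_deriv_on_I (d j) (d (S j)).

Definition Cn_on_I (n : nat) (q : R -> C) (d : nat -> R -> C) : Prop :=
  (forall x, I11 x -> d O x = q x) /\ deriv_chain n d /\ cont_on_I (d n).

Definition Kop (k : C) (q : R -> C) (x : R) : C :=
  @RInt C_R_CompleteNormedModule
    (fun r => Cmult (Cexp (Cmult (Copp k) (RtoC (Rabs (x - r))))) (q r)) (-1) 1.

Fixpoint Csum (n : nat) (f : nat -> C) : C :=
  match n with O => RtoC 0 | S m => Cplus (Csum m f) (f m) end.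

(* Delta(lambda) q = (lambda+alpha) e^{lambda tau0} q - sum_i c_i K_i q,
   with k_i = lambda + mu_i; indices i = 0..N-1 correspond to 1..N. *)
Definition Delta (N : nat) (alpha tau0 : R) (c mu : nat -> C) (lam : C)
    (q : R -> C) (x : R) : C :=
  Cminus (Cmult (Cmult (Cplus lam (RtoC alpha)) (Cexp (Cmult lam (RtoC tau0)))) (q x))
         (Csum N (fun i => Cmult (c i) (Kop (Cplus lam (mu i)) q x))).

Definition op_identity (N : nat) (alpha tau0 : R) (c mu : nat -> C) (lam : C)
    (zeta beta : nat -> C) : Prop :=
  forall (q : R -> C) (dq : nat -> R -> C),
    Cn_on_I (2 * N) q dq ->
    exists dD : nat -> R -> C,
      (forall x, I11 x -> dD O x = Delta N alpha tau0 c mu lam q x) /\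
      deriv_chain (2 * N) dD /\
      forall x, I11 x ->
        Cplus (Csum N (fun k => Cmult (zeta k) (dD (2 * k)%nat x))) (dD (2 * N)%nat x)
        = Csum (S N) (fun k => Cmult (beta k) (dq (2 * k)%nat x)).

(* Main.v *)
Require Import Defs.
From Stdlib Require Import Reals Lra Lia ZArith FunctionalExtensionality.
From Coquelicot Require Import Coquelicot.
Open Scope R_scope.

Section Lim.
Context {T : Type} {F : (T -> Prop) -> Prop} {FF : Filter F}.

Lemma lim_plus (f g : T -> C) (a b : C) :
  filterlim f F (locally a) -> filterlim g F (locally b) ->
  filterlim (fun y => Cplus (f y) (g y)) F (locally (Cplus a b)).
Proof.
  intros Hf Hg. eapply filterlim_comp_2; [exact Hf | exact Hg |].
  exact (@filterlim_plus C_AbsRing C_NormedModule a b).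
Qed.

Lemma lim_const (a : C) : filterlim (fun _ => a) F (locally a).
Proof. apply filterlim_const. Qed.

Lemma lim_opp (f : T -> C) (a : C) :
  filterlim f F (locally a) -> filterlim (fun y => Copp (f y)) F (locally (Copp a)).
Proof.
  intros Hf. eapply filterlim_comp; [exact Hf|].
  exact (@filterlim_opp C_AbsRing C_NormedModule a).
Qed.

Lemma lim_ext (f g : T -> C) (a : C) :
  (forall y, f y = g y) -> filterlim f F (locally a) -> filterlim g F (locally a).
Proof. intros H. apply filterlim_ext. exact H. Qed.

Lemma lim_ext_loc (f g : T -> C) (a : C) :
  F (fun y => f y = g y) -> filterlim f F (locally a) -> filterlim g F (locally a).
Proof. intros H. apply filterlim_ext_loc. exact H. Qed.

Lemma lim_eps (f : T -> C) (a : C) :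
  filterlim f F (locally a) <-> forall eps : R, 0 < eps -> F (fun y => Cmod (Cminus (f y) a) < eps).
Proof.
  split.
  - intros H eps He.
    assert (HP : locally a (fun z : C => Cmod (Cminus z a) < eps)).
    { apply (@locally_le_locally_norm R_AbsRing C_R_NormedModule).
      exists (mkposreal eps He). intros y Hy. unfold ball_norm in Hy.
      rewrite Cmod_norm. simpl in Hy. exact Hy. }
    exact (H _ HP).
  - intros H P HP. apply (@locally_norm_le_locally R_AbsRing C_R_NormedModule) in HP.
    destruct HP as [e He]. unfold filtermap. generalize (H e (cond_pos e)). apply filter_imp.
    intros y Hy. apply He. unfold ball_norm. rewrite <- Cmod_norm. exact Hy.
Qed.

Lemma lim_mult (f g : T -> C) (a b : C) :
  filterlim f F (locally a) -> filterlim g F (locally b) ->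
  filterlim (fun y => Cmult (f y) (g y)) F (locally (Cmult a b)).
Proof.
  intros Hf Hg. apply lim_eps. intros eps He.
  assert (Ha := Cmod_ge_0 a). assert (Hb := Cmod_ge_0 b).
  set (e1 := Rmin 1 (eps / (2 * (Cmod b + 1)))).
  set (e2 := eps / (2 * (Cmod a + 2))).
  assert (He1 : 0 < e1). { unfold e1. apply Rmin_pos; [lra|]. apply Rdiv_lt_0_compat; lra. }
  assert (He2 : 0 < e2). { unfold e2. apply Rdiv_lt_0_compat; lra. }
  generalize (filter_and _ _ (proj1 (lim_eps f a) Hf e1 He1) (proj1 (lim_eps g b) Hg e2 He2)).
  apply filter_imp. intros y [H1 H2].
  replace (Cminus (Cmult (f y) (g y)) (Cmult a b)) with
    (Cplus (Cmult (f y) (Cminus (g y) b)) (Cmult (Cminus (f y) a) b)) by ring.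
  eapply Rle_lt_trans; [apply Cmod_triangle|]. rewrite !Cmod_mult.
  assert (Hfy : Cmod (f y) <= Cmod a + 1).
  { replace (f y) with (Cplus a (Cminus (f y) a)) by ring.
    eapply Rle_trans; [apply Cmod_triangle|].
    assert (e1 <= 1) by apply Rmin_l. lra. }
  assert (Hm1 : Cmod (f y) * Cmod (Cminus (g y) b) <= (Cmod a + 2) * e2).
  { apply Rmult_le_compat; try apply Cmod_ge_0; lra. }
  assert (Hm2 : Cmod (Cminus (f y) a) * Cmod b <= e1 * (Cmod b + 1)).
  { apply Rmult_le_compat; try apply Cmod_ge_0; lra. }
  assert (E2 : (Cmod a + 2) * e2 = eps / 2). { unfold e2. field. lra. }
  assert (E1 : e1 * (Cmod b + 1) <= eps / 2).
  { unfold e1. eapply Rle_trans. apply Rmult_le_compat_r; [lra| apply Rmin_r].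
    right. field. lra. }
  assert (Cmod (Cminus (f y) a) * Cmod b < eps / 2 \/ Cmod (f y) * Cmod (Cminus (g y) b) < eps/2).
  { destruct (Req_dec (Cmod b) 0) as [Z|Z].
    - left. rewrite Z. lra.
    - left. apply Rle_lt_trans with (e1 * Cmod b). apply Rmult_le_compat_r; lra.
      apply Rlt_le_trans with (e1 * (Cmod b + 1)). apply Rmult_lt_compat_l; lra. lra. }
  lra.
Qed.
End Lim.

Definition quot (f : R -> C) (x y : R) : C := Cmult (RtoC (/ (y - x))) (Cminus (f y) (f x)).
Definition wf (S : R -> Prop) (x : R) := within (fun y => S y /\ y <> x) (locally x).
Definition Dv (S : R -> Prop) (f g : R -> C) : Prop :=
  forall x, S x -> filterlim (quot f x) (wf S x) (locally (g x)).

Lemma Dv_I11 f g : Dv I11 f g -> is_deriv_on_I f g.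
Proof. intros H. exact H. Qed.
Lemma I11_Dv f g : is_deriv_on_I f g -> Dv I11 f g.
Proof. intros H. exact H. Qed.

Instance wf_filter S x : Filter (wf S x).
Proof. unfold wf. apply within_filter, locally_filter. Qed.

Lemma loc_abs (x eps : R) : 0 < eps -> locally x (fun y => Rabs (y - x) < eps).
Proof. intros He. exists (mkposreal eps He). intros y Hy. exact Hy. Qed.

Lemma wf_abs S x eps : 0 < eps -> wf S x (fun y => Rabs (y - x) < eps).
Proof. intros He. unfold wf, within. generalize (loc_abs x eps He). apply filter_imp. auto. Qed.

Lemma wf_in S x : wf S x (fun y => S y /\ y <> x).
Proof. unfold wf, within. apply filter_forall. auto. Qed.

Lemma lim_RtoC_diff S x : filterlim (fun y => RtoC (y - x)) (wf S x) (locally (RtoC 0)).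
Proof.
  apply lim_eps. intros eps He. generalize (wf_abs S x eps He). apply filter_imp.
  intros y Hy. replace (Cminus (RtoC (y - x)) (RtoC 0)) with (RtoC (y - x)).
  rewrite Cmod_R. exact Hy. unfold Cminus. rewrite Copp_0, Cplus_0_r. reflexivity.
Qed.

Lemma Dv_cont S f g x : Dv S f g -> S x -> filterlim f (wf S x) (locally (f x)).
Proof.
  intros H Sx.
  assert (L := lim_plus _ _ _ _ (lim_const (F := wf S x) (f x))
                (lim_mult _ _ _ _ (lim_RtoC_diff S x) (H x Sx))).
  replace (Cplus (f x) (Cmult (RtoC 0) (g x))) with (f x) in L by ring.
  eapply lim_ext_loc; [|exact L]. generalize (wf_in S x). apply filter_imp.
  intros y [_ Hy]. unfold quot. rewrite Cmult_assoc, <- RtoC_mult, Rinv_r.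
  ring. lra.
Qed.

Lemma Dv_plus S f g f' g' : Dv S f f' -> Dv S g g' ->
  Dv S (fun y => Cplus (f y) (g y)) (fun y => Cplus (f' y) (g' y)).
Proof.
  intros Hf Hg x Sx. eapply lim_ext; [|exact (lim_plus _ _ _ _ (Hf x Sx) (Hg x Sx))].
  intros y. unfold quot. ring.
Qed.

Lemma Dv_scal S c f f' : Dv S f f' ->
  Dv S (fun y => Cmult c (f y)) (fun y => Cmult c (f' y)).
Proof.
  intros Hf x Sx. eapply lim_ext; [|exact (lim_mult _ _ _ _ (lim_const c) (Hf x Sx))].
  intros y. unfold quot. ring.
Qed.

Lemma Dv_opp S f f' : Dv S f f' -> Dv S (fun y => Copp (f y)) (fun y => Copp (f' y)).
Proof.
  intros Hf x Sx. eapply lim_ext; [|exact (lim_opp _ _ (Hf x Sx))].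
  intros y. unfold quot. ring.
Qed.

Lemma Dv_minus S f g f' g' : Dv S f f' -> Dv S g g' ->
  Dv S (fun y => Cminus (f y) (g y)) (fun y => Cminus (f' y) (g' y)).
Proof.
  intros Hf Hg. apply (Dv_plus S f (fun y => Copp (g y))); auto. apply Dv_opp; auto.
Qed.



Lemma Dv_mult S f g f' g' : Dv S f f' -> Dv S g g' ->
  Dv S (fun y => Cmult (f y) (g y)) (fun y => Cplus (Cmult (f' y) (g y)) (Cmult (f y) (g' y))).
Proof.
  intros Hf Hg x Sx.
  assert (L := lim_plus _ _ _ _ (lim_mult _ _ _ _ (Hf x Sx) (Dv_cont S g g' x Hg Sx))
                 (lim_mult _ _ _ _ (lim_const (f x)) (Hg x Sx))).
  eapply lim_ext; [|exact L]. intros y. unfold quot. ring.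
Qed.

Lemma Dv_sub (S S' : R -> Prop) f g : (forall y, S' y -> S y) -> Dv S f g -> Dv S' f g.
Proof.
  intros HS H x Sx. intros P HP. apply (H x (HS x Sx)) in HP.
  unfold filtermap, wf, within in *. revert HP. apply filter_imp. intros y Hy [H1 H2]. apply Hy. auto.
Qed.

Lemma Dv_ext (S : R -> Prop) f1 f2 g1 g2 : (forall y, S y -> f1 y = f2 y) -> (forall y, S y -> g1 y = g2 y) ->
  Dv S f1 g1 -> Dv S f2 g2.
Proof.
  intros E1 E2 H x Sx. rewrite <- E2 by auto.
  apply (filterlim_ext_loc (quot f1 x)); [| exact (H x Sx)].
  generalize (wf_in S x). apply filter_imp. intros y [Hy _]. unfold quot. rewrite !E1; auto.
Qed.

Lemma Dv_const S c : Dv S (fun _ => c) (fun _ => RtoC 0).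
Proof.
  intros x Sx. eapply lim_ext; [|apply lim_const]. intros y. unfold quot. ring.
Qed.

Lemma Cexp_add a b : Cexp (Cplus a b) = Cmult (Cexp a) (Cexp b).
Proof.
  destruct a as [a1 a2], b as [b1 b2]. unfold Cexp, Cmult, Cplus; simpl.
  rewrite exp_plus, cos_plus, sin_plus. f_equal; ring.
Qed.

Lemma Cexp_0 : Cexp (RtoC 0) = RtoC 1.
Proof. unfold Cexp, RtoC; simpl. rewrite exp_0, cos_0, sin_0. f_equal; ring. Qed.

Lemma Cexp_nz z : Cexp z <> RtoC 0.
Proof.
  intros H. assert (E : Cexp (Cplus z (Copp z)) = RtoC 1).
  { rewrite Cplus_opp_r. apply Cexp_0. }
  rewrite Cexp_add, H, Cmult_0_l in E. injection E. lra.
Qed.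

Lemma Cexp_ay a y : Cexp (Cmult a (RtoC y)) =
  (exp (fst a * y) * cos (snd a * y), exp (fst a * y) * sin (snd a * y)).
Proof.
  destruct a as [a1 a2]. unfold Cexp, Cmult, RtoC; simpl. f_equal; f_equal; f_equal; ring.
Qed.

Lemma Rlim_eps {T} {F : (T -> Prop) -> Prop} {FF : Filter F} (g : T -> R) r :
  filterlim g F (locally r) -> forall eps, 0 < eps -> F (fun y => Rabs (g y - r) < eps).
Proof.
  intros H eps He. apply (H (fun z => Rabs (z - r) < eps)). exists (mkposreal eps He). intros y Hy. exact Hy.
Qed.

Lemma lim_comp {T} {F : (T -> Prop) -> Prop} {FF : Filter F} (h : T -> C) (l : C) :
  filterlim (fun y => fst (h y)) F (locally (fst l)) ->
  filterlim (fun y => snd (h y)) F (locally (snd l)) ->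
  filterlim h F (locally l).
Proof.
  intros H1 H2. apply (lim_eps (F := F)). intros eps He.
  generalize (@filter_and _ F FF _ _ (Rlim_eps (F := F) _ _ H1 (eps/2) ltac:(lra)) (Rlim_eps (F := F) _ _ H2 (eps/2) ltac:(lra))).
  apply filter_imp. intros y [Y1 Y2].
  eapply Rle_lt_trans; [apply Cmod_2Rmax|]. simpl.
  assert (Hs : sqrt 2 < 2).
  { rewrite <- (sqrt_square 2) at 2 by lra. apply sqrt_lt_1; lra. }
  assert (HM : Rmax (Rabs (fst (h y) - fst l)) (Rabs (snd (h y) - snd l)) < eps / 2)
    by (apply Rmax_lub_lt; auto).
  destruct l as [l1 l2], (h y) as [u v]. simpl in *.
  assert (0 <= Rmax (Rabs (u + - l1)) (Rabs (v + - l2))).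
  { eapply Rle_trans; [apply Rabs_pos| apply Rmax_l]. }
  apply Rle_lt_trans with (2 * Rmax (Rabs (u + - l1)) (Rabs (v + - l2))).
  apply Rmult_le_compat_r; lra. unfold Rminus in HM. lra.
Qed.

Lemma Rquot_lim (S : R -> Prop) (f : R -> R) x l : derivable_pt_lim f x l ->
  filterlim (fun y => / (y - x) * (f y - f x)) (wf S x) (locally l).
Proof.
  intros H. apply (filterlim_locally (F := wf S x)). intros eps.
  destruct (H eps (cond_pos eps)) as [d Hd].
  unfold wf, within. exists d. intros y Hy [_ Hyx]. change R in y. change (Rabs (y - x) < d) in Hy.
  assert (Hh : y - x <> 0) by lra.
  specialize (Hd (y - x) Hh Hy). replace (x + (y - x)) with y in Hd by ring.
  change (Rabs (/ (y - x) * (f y - f x) - l) < eps).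
  replace (/ (y - x) * (f y - f x)) with ((f y - f x) / (y - x)) by (unfold Rdiv; ring).
  exact Hd.
Qed.

Lemma Dv_Cexp S a : Dv S (fun x => Cexp (Cmult a (RtoC x))) (fun x => Cmult a (Cexp (Cmult a (RtoC x)))).
Proof.
  intros x Sx. apply lim_comp.
  - eapply filterlim_ext; [| apply (Rquot_lim S (fun y => exp (fst a * y) * cos (snd a * y)))].
    + intros y. unfold quot. rewrite !Cexp_ay. unfold Cmult, Cminus, Cplus, Copp, RtoC; simpl. ring.
    + rewrite Cexp_ay. destruct a as [a1 a2]. simpl. apply is_derive_Reals.
      auto_derive; auto. ring.
  - eapply filterlim_ext; [| apply (Rquot_lim S (fun y => exp (fst a * y) * sin (snd a * y)))].
    + intros y. unfold quot. rewrite !Cexp_ay. unfold Cmult, Cminus, Cplus, Copp, RtoC; simpl. ring.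
    + rewrite Cexp_ay. destruct a as [a1 a2]. simpl. apply is_derive_Reals.
      auto_derive; auto. ring.
Qed.

Definition CRInt (g : R -> C) (a b : R) : C := @RInt C_R_CompleteNormedModule g a b.

Lemma derive_quot S (f : R -> C_R_NormedModule) x l : is_derive f x l -> filterlim (quot f x) (wf S x) (locally l).
Proof.
  intros [_ H]. specialize (H x (fun P HP => HP)).
  apply lim_eps. intros eps He. specialize (H (mkposreal (eps/2) ltac:(lra))).
  unfold wf, within. revert H. apply filter_imp. intros y Hy [_ Hyx]. simpl in Hy.
  change R in y.
  rewrite <- !Cmod_norm in Hy.
  assert (Hy' : Cmod (minus (minus (f y) (f x)) (scal (minus y x) l)) <= eps / 2 * Rabs (y - x)) by exact Hy.
  clear Hy. rename Hy' into Hy.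
  assert (Hh : y - x <> 0) by lra.
  assert (E : Cminus (quot f x y) l = Cmult (RtoC (/ (y - x)))
       (minus (minus (f y) (f x)) (scal (minus y x) l))).
  { unfold quot. rewrite scal_R_Cmult. change (minus y x) with (y - x).
    change (@minus C_R_NormedModule) with Cminus. unfold Cminus.
    assert (H1 : Cmult (RtoC (/ (y - x))) (RtoC (y - x)) = RtoC 1).
    { rewrite <- RtoC_mult, Rinv_l by auto. reflexivity. }
    replace (Copp l) with (Copp (Cmult (Cmult (RtoC (/ (y - x))) (RtoC (y - x))) l)) at 1
      by (rewrite H1; ring).
    ring. }
  rewrite E, Cmod_mult, Cmod_R, Rabs_inv.
  apply Rle_lt_trans with (/ Rabs (y - x) * (eps / 2 * Rabs (y - x))).
  apply Rmult_le_compat_l. left; apply Rinv_0_lt_compat, Rabs_pos_lt; auto. exact Hy.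
  field_simplify. lra. apply Rabs_no_R0; auto.
Qed.

Lemma Dv_RInt S (g : R -> C) a : (forall x, continuous g x) ->
  Dv S (fun x => CRInt g a x) g.
Proof.
  intros Hc x Sx. apply derive_quot. unfold CRInt.
  apply (is_derive_RInt (V := C_R_CompleteNormedModule) g _ a).
  - apply filter_forall. intros b. apply RInt_correct. apply ex_RInt_continuous. auto.
  - auto.
Qed.

Lemma is_RInt_Cmult (g : R -> C) a b (l : C) (c : C) :
  @is_RInt C_R_NormedModule g a b l ->
  @is_RInt C_R_NormedModule (fun t => Cmult c (g t)) a b (Cmult c l).
Proof.
  intros H.
  assert (H1 := @is_RInt_fct_extend_fst R_NormedModule R_NormedModule g a b l H).
  assert (H2 := @is_RInt_fct_extend_snd R_NormedModule R_NormedModule g a b l H).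
  destruct c as [c1 c2].
  replace (Cmult (c1, c2) l) with ((c1 * fst l - c2 * snd l, c1 * snd l + c2 * fst l) : C)
    by (destruct l; unfold Cmult; simpl; f_equal; ring).
  apply (@is_RInt_fct_extend_pair R_NormedModule R_NormedModule (fun t => Cmult (c1, c2) (g t))).
  - simpl. apply (is_RInt_ext (fun t => minus (scal c1 (fst (g t))) (scal c2 (snd (g t))))).
    + intros t _. destruct (g t). simpl. reflexivity.
    + apply (is_RInt_minus (V := R_NormedModule)); [apply (is_RInt_scal _ _ _ c1 _ H1) | apply (is_RInt_scal _ _ _ c2 _ H2)].
  - simpl. apply (is_RInt_ext (fun t => plus (scal c1 (snd (g t))) (scal c2 (fst (g t))))).
    + intros t _. destruct (g t). simpl. reflexivity.
    + apply (is_RInt_plus (V := R_NormedModule)); [apply (is_RInt_scal _ _ _ c1 _ H2) | apply (is_RInt_scal _ _ _ c2 _ H1)].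
Qed.

Definition Ke (a : C) (x : R) : C := Cexp (Cmult a (RtoC x)).

Lemma wf_cont (f : R -> C) x : filterlim f (wf (fun _ => True) x) (locally (f x)) -> continuous f x.
Proof.
  intros H P HP. specialize (H P HP). unfold filtermap, wf, within in *.
  apply locally_singleton in HP.
  revert H. apply filter_imp. intros y Hy. destruct (Req_dec y x) as [->|Hne]; auto.
Qed.

Lemma cont_Ke a x : continuous (Ke a) x.
Proof.
  apply wf_cont. unfold Ke. apply (Dv_cont (fun _ => True) _ _ x (Dv_Cexp _ a)). auto.
Qed.

Lemma cont_mult (f g : R -> C) x : continuous f x -> continuous g x -> continuous (fun y => Cmult (f y) (g y)) x.
Proof. intros Hf Hg. apply (lim_mult (F := locally x)); auto. Qed.

Lemma piece (h g : R -> C) c a b : a <= b -> (forall r, a < r < b -> h r = Cmult c (g r)) ->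
  (forall r, continuous g r) -> @is_RInt C_R_NormedModule h a b (Cmult c (CRInt g a b)).
Proof.
  intros Hab E Hc.
  apply (is_RInt_ext (fun r => Cmult c (g r))).
  - intros r Hr. rewrite Rmin_left, Rmax_right in Hr by lra. symmetry. auto.
  - apply is_RInt_Cmult. apply (RInt_correct (V := C_R_CompleteNormedModule)).
    apply ex_RInt_continuous. auto.
Qed.

Lemma Ke_add a b x : Ke (Cplus a b) x = Cmult (Ke a x) (Ke b x).
Proof. unfold Ke. rewrite <- Cexp_add. f_equal. ring. Qed.

Lemma Kop_split k q qh x : (forall r, -1 < r < 1 -> q r = qh r) -> (forall r, continuous qh r) -> I11 x ->
  Kop k q x = Cplus (Cmult (Ke (Copp k) x) (CRInt (fun r => Cmult (Ke k r) (qh r)) (-1) x))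
                    (Cmult (Ke k x) (CRInt (fun r => Cmult (Ke (Copp k) r) (qh r)) x 1)).
Proof.
  intros Eq Hc [Hx1 Hx2]. unfold Kop.
  set (h := fun r => Cmult (Cexp (Cmult (Copp k) (RtoC (Rabs (x - r))))) (q r)).
  assert (P1 : @is_RInt C_R_NormedModule h (-1) x
                 (Cmult (Ke (Copp k) x) (CRInt (fun r => Cmult (Ke k r) (qh r)) (-1) x))).
  { apply piece; auto.
    - intros r Hr. unfold h. rewrite Eq by lra. rewrite Rabs_right by lra.
      unfold Ke. rewrite Cmult_assoc, <- Cexp_add. f_equal. f_equal.
      rewrite RtoC_minus. ring.
    - intros r. apply cont_mult; auto. apply cont_Ke. }
  assert (P2 : @is_RInt C_R_NormedModule h x 1
                 (Cmult (Ke k x) (CRInt (fun r => Cmult (Ke (Copp k) r) (qh r)) x 1))).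
  { apply piece; auto.
    - intros r Hr. unfold h. rewrite Eq by lra. rewrite Rabs_left by lra.
      unfold Ke. rewrite Cmult_assoc, <- Cexp_add. f_equal. f_equal.
      rewrite RtoC_opp, RtoC_minus. ring.
    - intros r. apply cont_mult; auto. apply cont_Ke. }
  rewrite <- (is_RInt_unique (V := C_R_CompleteNormedModule) _ _ _ _ P1), <- (is_RInt_unique (V := C_R_CompleteNormedModule) _ _ _ _ P2).
  symmetry. apply (RInt_Chasles (V := C_R_CompleteNormedModule)).
  - eexists; exact P1.
  - eexists; exact P2.
Qed.

Lemma Csum_ext n f g : (forall m, (m < n)%nat -> f m = g m) -> Csum n f = Csum n g.
Proof. induction n; simpl; intros H; auto. rewrite IHn by (intros; apply H; lia). rewrite H by lia. auto. Qed.

Lemma Csum_plus n f g : Csum n (fun m => Cplus (f m) (g m)) = Cplus (Csum n f) (Csum n g).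
Proof. induction n; simpl. ring. rewrite IHn. ring. Qed.

Lemma Csum_scal n c f : Csum n (fun m => Cmult c (f m)) = Cmult c (Csum n f).
Proof. induction n; simpl. ring. rewrite IHn. ring. Qed.

Lemma Csum_opp n f : Csum n (fun m => Copp (f m)) = Copp (Csum n f).
Proof. induction n; simpl. ring. rewrite IHn. ring. Qed.

Lemma Csum_minus n f g : Csum n (fun m => Cminus (f m) (g m)) = Cminus (Csum n f) (Csum n g).
Proof. induction n; simpl. ring. rewrite IHn. ring. Qed.

Lemma Csum_zero n f : (forall m, (m < n)%nat -> f m = RtoC 0) -> Csum n f = RtoC 0.
Proof. intros H. rewrite (Csum_ext n f (fun _ => RtoC 0)) by auto. induction n; simpl; auto. rewrite IHn. ring. intros; auto. Qed.

Lemma Csum_shift n f : Csum (S n) f = Cplus (f O) (Csum n (fun m => f (S m))).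
Proof. induction n; simpl. ring. simpl in IHn. rewrite IHn. ring. Qed.

Lemma Csum_swap a b (F : nat -> nat -> C) :
  Csum a (fun i => Csum b (fun m => F i m)) = Csum b (fun m => Csum a (fun i => F i m)).
Proof.
  induction a; simpl. symmetry. apply Csum_zero. auto.
  rewrite IHa. rewrite <- Csum_plus. reflexivity.
Qed.

Lemma Csum_last n f : Csum (S n) f = Cplus (Csum n f) (f n).
Proof. reflexivity. Qed.

Lemma Cmult_eq0 a b : Cmult a b = RtoC 0 -> a <> RtoC 0 -> b = RtoC 0.
Proof.
  intros H Ha. replace b with (Cmult (Cinv a) (Cmult a b)) by (field; auto).
  rewrite H. ring.
Qed.

Lemma Cminus_nz a b : a <> b -> Cminus a b <> RtoC 0.
Proof. intros H E. apply H. replace a with (Cplus (Cminus a b) b) by ring. rewrite E. ring. Qed.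

Lemma vdm_T M (W Z : nat -> C) :
  (forall t t', (t < M)%nat -> (t' < M)%nat -> t <> t' -> Z t <> Z t') ->
  (forall n, (n < M)%nat -> Csum M (fun t => Cmult (W t) (Cpow (Z t) n)) = RtoC 0) ->
  forall t, (t < M)%nat -> W t = RtoC 0.
Proof.
  revert W. induction M as [|M IH]; intros W HZ HW t Ht; [lia|].
  assert (Hlow : forall t, (t < M)%nat -> W t = RtoC 0).
  { intros t0 Ht0.
    assert (H' := IH (fun t => Cmult (W t) (Cminus (Z t) (Z M)))).
    assert (E : Cmult (W t0) (Cminus (Z t0) (Z M)) = RtoC 0).
    { apply H'; [ intros; apply HZ; lia | | exact Ht0].
      { intros n Hn.
        assert (A1 := HW n ltac:(lia)). assert (A2 := HW (S n) ltac:(lia)).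
        rewrite Csum_last in A1, A2.
        transitivity (Cminus (Csum M (fun t => Cmult (W t) (Cpow (Z t) (S n))))
                             (Cmult (Z M) (Csum M (fun t => Cmult (W t) (Cpow (Z t) n))))).
        + rewrite <- Csum_scal, <- Csum_minus. apply Csum_ext. intros m _. simpl. ring.
        + replace (Csum M (fun t => Cmult (W t) (Cpow (Z t) (S n)))) with
            (Copp (Cmult (W M) (Cpow (Z M) (S n)))).
          replace (Csum M (fun t => Cmult (W t) (Cpow (Z t) n))) with
            (Copp (Cmult (W M) (Cpow (Z M) n))).
          simpl. ring.
          * replace (Csum M (fun t => Cmult (W t) (Cpow (Z t) n))) with
              (Cminus (Cplus (Csum M (fun t => Cmult (W t) (Cpow (Z t) n))) (Cmult (W M) (Cpow (Z M) n))) (Cmult (W M) (Cpow (Z M) n))) by ring.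
            rewrite A1. ring.
          * replace (Csum M (fun t => Cmult (W t) (Cpow (Z t) (S n)))) with
              (Cminus (Cplus (Csum M (fun t => Cmult (W t) (Cpow (Z t) (S n)))) (Cmult (W M) (Cpow (Z M) (S n)))) (Cmult (W M) (Cpow (Z M) (S n)))) by ring.
            rewrite A2. ring. } }
    rewrite Cmult_comm in E. apply Cmult_eq0 in E; auto.
    apply Cminus_nz. apply HZ; lia. }
  destruct (Nat.eq_dec t M) as [->|Hne]; [| apply Hlow; lia].
  assert (A := HW O ltac:(lia)). rewrite Csum_last in A.
  rewrite Csum_zero in A by (intros m Hm; rewrite Hlow by auto; ring).
  simpl in A. replace (W M) with (Cplus (RtoC 0) (Cmult (W M) (RtoC 1))) by ring. exact A.
Qed.

Definition Tail (p : nat -> C) (M j : nat) (X : C) : C :=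
  Csum (S M - j) (fun t => Cmult (p (j + t)%nat) (Cpow X t)).

Lemma Tail_horner p M j X : (j <= M)%nat -> Tail p M j X = Cplus (p j) (Cmult X (Tail p M (S j) X)).
Proof.
  intros Hj. unfold Tail. replace (S M - j)%nat with (S (S M - S j)) by lia.
  rewrite Csum_shift. rewrite <- Csum_scal. f_equal.
  - rewrite Nat.add_0_r. simpl. ring.
  - apply Csum_ext. intros m _. replace (j + S m)%nat with (S j + m)%nat by lia. simpl. ring.
Qed.

Lemma Tail_top p M X : Tail p M (S M) X = RtoC 0.
Proof. unfold Tail. replace (S M - S M)%nat with O by lia. reflexivity. Qed.

Lemma Tail_div p M X w : forall k j, (j + k = M)%nat ->
  Cminus (Tail p M j X) (Tail p M j w) =
  Cmult (Cminus X w) (Csum k (fun t => Cmult (Tail p M (S j + t) w) (Cpow X t))).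
Proof.
  induction k; intros j Hj.
  - rewrite Nat.add_0_r in Hj. subst j. rewrite (Tail_horner p M M X), (Tail_horner p M M w) by lia.
    simpl. rewrite !Tail_top. ring.
  - rewrite (Tail_horner p M j X), (Tail_horner p M j w) by lia.
    specialize (IHk (S j) ltac:(lia)).
    rewrite Csum_shift.
    transitivity (Cplus (Cmult (Cminus X w) (Tail p M (S j) w))
                        (Cmult X (Cminus (Tail p M (S j) X) (Tail p M (S j) w)))); [ring|].
    rewrite IHk. rewrite Nat.add_0_r. rewrite <- !Csum_scal.
    replace (Csum k (fun t => Cmult X (Cmult (Cminus X w) (Cmult (Tail p M (S (S j) + t) w) (Cpow X t)))))
      with (Cmult (Cminus X w) (Csum k (fun t => Cmult (Tail p M (S j + S t) w) (Cpow X (S t))))).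
    + ring.
    + rewrite <- Csum_scal. apply Csum_ext. intros m _. replace (S j + S m)%nat with (S (S j) + m)%nat by lia.
      simpl. ring.
Qed.

Definition Pev (p : nat -> C) (M : nat) (X : C) : C := Csum (S M) (fun m => Cmult (p m) (Cpow X m)).

Lemma Pev_Tail p M X : Pev p M X = Tail p M O X.
Proof. unfold Pev, Tail. rewrite Nat.sub_0_r. reflexivity. Qed.

Lemma poly_roots M (p z : nat -> C) :
  (forall i j, (i <= M)%nat -> (j <= M)%nat -> i <> j -> z i <> z j) ->
  (forall i, (i <= M)%nat -> Pev p M (z i) = RtoC 0) ->
  forall m, (m <= M)%nat -> p m = RtoC 0.
Proof.
  revert p z. induction M as [|M IH]; intros p z Hz Hr m Hm.
  - specialize (Hr O ltac:(lia)). unfold Pev in Hr. simpl in Hr.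
    replace m with O by lia. rewrite <- Hr. ring.
  - set (w := z (S M)).
    set (r := fun t => Tail p (S M) (S t) w).
    assert (Hq : forall i, (i <= M)%nat -> Pev r M (z i) = RtoC 0).
    { intros i Hi.
      assert (D := Tail_div p (S M) (z i) w (S M) O eq_refl).
      rewrite <- !Pev_Tail in D. rewrite (Hr i) in D by lia. unfold w in D. rewrite (Hr (S M)) in D by lia.
      assert (E : Cmult (Cminus (z i) (z (S M))) (Pev r M (z i)) = RtoC 0).
      { transitivity (Cminus (RtoC 0) (RtoC 0)); [rewrite D; reflexivity | ring]. }
      apply Cmult_eq0 in E; auto. apply Cminus_nz. apply Hz; lia. }
    assert (Hr0 : forall t, (t <= M)%nat -> r t = RtoC 0).
    { apply (IH r z); [intros; apply Hz; lia | exact Hq]. }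
    destruct m as [|m].
    + assert (E := Tail_horner p (S M) O w ltac:(lia)).
      rewrite <- Pev_Tail in E. unfold w in E. rewrite (Hr (S M)) in E by lia.
      fold w in E. change (Tail p (S M) 1 w) with (r O) in E. rewrite Hr0 in E by lia.
      replace (p O) with (Cminus (Cplus (p O) (Cmult w (RtoC 0))) (RtoC 0)) by ring. rewrite <- E. ring.
    + assert (E := Tail_horner p (S M) (S m) w Hm).
      assert (E1 : Tail p (S M) (S m) w = RtoC 0).
      { destruct (Nat.eq_dec m (S M)) as [->|Hne]; [lia|]. change (Tail p (S M) (S m) w) with (r m). apply Hr0. lia. }
      assert (E2 : Tail p (S M) (S (S m)) w = RtoC 0).
      { destruct (Nat.eq_dec (S m) (S M)) as [Heq|Hne].
        - injection Heq as ->. apply Tail_top.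
        - change (Tail p (S M) (S (S m)) w) with (r (S m)). apply Hr0. lia. }
      rewrite E1, E2 in E. replace (p (S m)) with (Cplus (p (S m)) (Cmult w (RtoC 0))) by ring. rewrite <- E. reflexivity.
Qed.

Definition Dl (w : C) (f : nat -> C) : nat -> C := fun n => Cminus (f (S (S n))) (Cmult w (f n)).

Fixpoint Pr (w : nat -> C) (n : nat) (f : nat -> C) : nat -> C :=
  match n with O => f | S n' => Dl (w n') (Pr w n' f) end.

Fixpoint Pskip (w : nat -> C) (i n : nat) (f : nat -> C) : nat -> C :=
  match n with O => f | S n' => if Nat.eqb n' i then Pskip w i n' f else Dl (w n') (Pskip w i n' f) end.

Lemma Dl_comm a b f : Dl a (Dl b f) = Dl b (Dl a f).
Proof. apply functional_extensionality. intros n. unfold Dl. ring. Qed.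

Lemma Pr_Dl w n a f : Pr w n (Dl a f) = Dl a (Pr w n f).
Proof. induction n; simpl; auto. rewrite IHn. apply Dl_comm. Qed.

Lemma Pskip_Pr w i n f : (n <= i)%nat -> Pskip w i n f = Pr w n f.
Proof.
  induction n; simpl; intros H; auto. destruct (Nat.eqb_spec n i); [lia|]. rewrite IHn by lia. auto.
Qed.

Lemma Pr_skip w i n f : (i < n)%nat -> Pr w n f = Pskip w i n (Dl (w i) f).
Proof.
  induction n; intros H; [lia|]. simpl. destruct (Nat.eqb_spec n i).
  - subst. rewrite Pskip_Pr by lia. rewrite Pr_Dl. auto.
  - rewrite IHn by lia. auto.
Qed.

Lemma Dl_lin a f g (c d : C) : Dl a (fun n => Cplus (Cmult c (f n)) (Cmult d (g n))) =
  fun n => Cplus (Cmult c (Dl a f n)) (Cmult d (Dl a g n)).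
Proof. apply functional_extensionality. intros n. unfold Dl. ring. Qed.

Lemma Pr_lin w n f g c d : Pr w n (fun j => Cplus (Cmult c (f j)) (Cmult d (g j))) =
  fun j => Cplus (Cmult c (Pr w n f j)) (Cmult d (Pr w n g j)).
Proof. induction n; simpl; auto. rewrite IHn. apply Dl_lin. Qed.

Lemma Pr_ext w n f g : (forall j, f j = g j) -> Pr w n f = Pr w n g.
Proof. intros H. f_equal. apply functional_extensionality. auto. Qed.

Lemma Pr_zero w n : Pr w n (fun _ => RtoC 0) = fun _ => RtoC 0.
Proof.
  induction n; simpl; auto. rewrite IHn. apply functional_extensionality. intros. unfold Dl. ring.
Qed.

Lemma Pr_Csum w n N (F : nat -> nat -> C) :
  Pr w n (fun j => Csum N (fun i => F i j)) = fun j => Csum N (fun i => Pr w n (F i) j).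
Proof.
  induction N; simpl.
  - apply Pr_zero.
  - rewrite (Pr_ext w n _ (fun j => Cplus (Cmult (RtoC 1) (Csum N (fun i => F i j))) (Cmult (RtoC 1) (F N j))))
      by (intros; ring).
    rewrite Pr_lin, IHN. apply functional_extensionality. intros. simpl. ring.
Qed.

Definition CS (w : C) (r : nat -> C) (n : nat) : nat -> C :=
  fun m => Cminus (match m with O => RtoC 0 | S m' => r m' end) (Cmult w (if Nat.leb m n then r m else RtoC 0)).

Lemma Dl_rep w r n (f h : nat -> C) : (forall j, h j = Csum (S n) (fun m => Cmult (r m) (f (j + 2 * m)%nat))) ->
  forall j, Dl w h j = Csum (S (S n)) (fun m => Cmult (CS w r n m) (f (j + 2 * m)%nat)).
Proof.
  intros H j. unfold Dl, CS. rewrite !H.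
  transitivity (Cminus (Csum (S (S n)) (fun m => Cmult (match m with O => RtoC 0 | S m' => r m' end) (f (j + 2 * m)%nat)))
     (Cmult w (Csum (S (S n)) (fun m => Cmult (if Nat.leb m n then r m else RtoC 0) (f (j + 2 * m)%nat))))).
  2: { rewrite <- Csum_scal, <- Csum_minus. apply Csum_ext. intros; ring. }
  f_equal.
  - symmetry. rewrite Csum_shift. rewrite Cmult_0_l, Cplus_0_l. apply Csum_ext. intros m _.
    f_equal. f_equal. lia.
  - f_equal. symmetry. rewrite Csum_last. rewrite (proj2 (Nat.leb_gt (S n) n)) by lia.
    rewrite Cmult_0_l, Cplus_0_r. apply Csum_ext. intros m Hm.
    rewrite (proj2 (Nat.leb_le m n)) by lia. reflexivity.
Qed.

Fixpoint PC (w : nat -> C) (n : nat) : nat -> C :=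
  match n with O => fun m => if Nat.eqb m O then RtoC 1 else RtoC 0 | S n' => CS (w n') (PC w n') n' end.

Fixpoint SC (w : nat -> C) (i n : nat) : nat -> C :=
  match n with O => fun m => if Nat.eqb m O then RtoC 1 else RtoC 0
  | S n' => if Nat.eqb n' i then (fun m => if Nat.leb m n' then SC w i n' m else RtoC 0)
            else CS (w n') (SC w i n') n' end.

Lemma Pr_rep w n f j : Pr w n f j = Csum (S n) (fun m => Cmult (PC w n m) (f (j + 2 * m)%nat)).
Proof.
  revert j. induction n; intros j.
  - simpl. rewrite Nat.add_0_r. ring.
  - simpl. apply Dl_rep. auto.
Qed.

Lemma PC_top w n : PC w n n = RtoC 1.
Proof.
  induction n; simpl; auto. unfold CS. rewrite IHn. rewrite (proj2 (Nat.leb_gt (S n) n)) by lia. ring.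
Qed.

Lemma Pskip_rep w i n f j : Pskip w i n f j = Csum (S n) (fun m => Cmult (SC w i n m) (f (j + 2 * m)%nat)).
Proof.
  revert j. induction n; intros j.
  - simpl. rewrite Nat.add_0_r. ring.
  - cbn [Pskip SC]. destruct (Nat.eqb n i).
    + rewrite IHn. rewrite (Csum_last (S n)). rewrite (proj2 (Nat.leb_gt (S n) n)) by lia.
      rewrite Cmult_0_l, Cplus_0_r. apply Csum_ext. intros m Hm.
      rewrite (proj2 (Nat.leb_le m n)) by lia. reflexivity.
    + apply Dl_rep. auto.
Qed.

Lemma Dv_Ke S a : Dv S (Ke a) (fun x => Cmult a (Ke a x)).
Proof. apply Dv_Cexp. Qed.

Lemma Ke_zero x : Ke (RtoC 0) x = RtoC 1.
Proof. unfold Ke. rewrite Cmult_0_l. apply Cexp_0. Qed.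

Lemma Ke_inv k x : Cmult (Ke (Copp k) x) (Ke k x) = RtoC 1.
Proof. rewrite <- Ke_add. replace (Cplus (Copp k) k) with (RtoC 0) by ring. apply Ke_zero. Qed.

Definition Afun k (qh : R -> C) x := CRInt (fun r => Cmult (Ke k r) (qh r)) (-1) x.
Definition Bfun k (qh : R -> C) x := Copp (CRInt (fun r => Cmult (Ke (Copp k) r) (qh r)) 1 x).
Definition P0 k qh x := Cplus (Cmult (Ke (Copp k) x) (Afun k qh x)) (Cmult (Ke k x) (Bfun k qh x)).
Definition P1 k qh x := Cmult k (Cminus (Cmult (Ke k x) (Bfun k qh x)) (Cmult (Ke (Copp k) x) (Afun k qh x))).

Section K.
Variable k : C.
Variable qh : R -> C.
Hypothesis Hqh : forall r, continuous qh r.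

Lemma Dv_A S : Dv S (Afun k qh) (fun x => Cmult (Ke k x) (qh x)).
Proof. apply Dv_RInt. intros x. apply cont_mult; auto. apply cont_Ke. Qed.

Lemma Dv_Bf S : Dv S (Bfun k qh) (fun x => Copp (Cmult (Ke (Copp k) x) (qh x))).
Proof. apply Dv_opp. apply Dv_RInt. intros x. apply cont_mult; auto. apply cont_Ke. Qed.

Lemma Dv_P0 S : Dv S (P0 k qh) (P1 k qh).
Proof.
  eapply Dv_ext; [intros; reflexivity| |
    apply Dv_plus; apply Dv_mult; (apply Dv_Ke || apply Dv_A || apply Dv_Bf)].
  intros y _. unfold P1. ring.
Qed.

Lemma Dv_P1 S : Dv S (P1 k qh) (fun x => Cminus (Cmult (Cmult k k) (P0 k qh x)) (Cmult (Cmult (RtoC 2) k) (qh x))).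
Proof.
  eapply Dv_ext; [intros; reflexivity| |
    apply Dv_scal; apply Dv_minus; apply Dv_mult; (apply Dv_Ke || apply Dv_A || apply Dv_Bf)].
  intros y _. unfold P0.
  transitivity (Cminus (Cmult (Cmult k k) (P0 k qh y)) (Cmult (Cmult (RtoC 2) k) (Cmult (Cmult (Ke (Copp k) y) (Ke k y)) (qh y)))).
  - unfold P0. ring.
  - rewrite Ke_inv. unfold P0. ring.
Qed.

Fixpoint KD (d : nat -> R -> C) (n : nat) : R -> C :=
  match n with
  | O => P0 k qh
  | S O => P1 k qh
  | S (S m as m') => fun x => Cminus (Cmult (Cmult k k) (KD d m x)) (Cmult (Cmult (RtoC 2) k) (d m x))
  end.

Lemma Dv_KD M d : deriv_chain M d -> (forall x, I11 x -> d O x = qh x) ->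
  forall n, (n < M)%nat -> Dv I11 (KD d n) (KD d (S n)).
Proof.
  intros Hd Hd0.
  assert (G : forall n, ((n < M)%nat -> Dv I11 (KD d n) (KD d (S n))) /\
                        ((S n < M)%nat -> Dv I11 (KD d (S n)) (KD d (S (S n))))).
  { induction n as [|n IH].
    - split; intros _.
      + apply Dv_P0.
      + eapply Dv_ext; [intros; reflexivity | | apply Dv_P1].
        intros y Hy. simpl. rewrite Hd0; auto.
    - split; [apply IH|]. intros Hn.
      change (Dv I11 (fun x => Cminus (Cmult (Cmult k k) (KD d n x)) (Cmult (Cmult (RtoC 2) k) (d n x)))
                     (fun x => Cminus (Cmult (Cmult k k) (KD d (S n) x)) (Cmult (Cmult (RtoC 2) k) (d (S n) x)))).
      apply Dv_minus; apply Dv_scal.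
      + apply IH. lia.
      + apply I11_Dv. apply Hd. lia. }
  intros n Hn. apply G. auto.
Qed.
End K.

Definition clamp (x : R) : R := Rmax (-1) (Rmin 1 x).

Lemma clamp_I11 x : I11 (clamp x).
Proof. unfold clamp, I11, Rmax, Rmin. repeat destruct Rle_dec; lra. Qed.

Lemma clamp_id x : I11 x -> clamp x = x.
Proof. unfold clamp, I11, Rmax, Rmin. intros. repeat destruct Rle_dec; lra. Qed.

Lemma clamp_lip x y : Rabs (clamp x - clamp y) <= Rabs (x - y).
Proof.
  unfold clamp, Rmax, Rmin. repeat destruct Rle_dec; unfold Rabs; repeat destruct Rcase_abs; lra.
Qed.

Lemma cont_clamp (g : R -> C) : (forall x, I11 x -> filterlim g (wf I11 x) (locally (g x))) ->
  forall y, continuous (fun z => g (clamp z)) y.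
Proof.
  intros H y P HP. set (x := clamp y).
  assert (Hx : I11 x) by apply clamp_I11.
  specialize (H x Hx P HP). unfold filtermap, wf, within in H.
  apply locally_singleton in HP.
  destruct H as [d Hd]. exists d. intros z Hz. unfold filtermap.
  change (Rabs (z - y) < d) in Hz.
  destruct (Req_dec (clamp z) x) as [E|E].
  - rewrite E. exact HP.
  - apply Hd; [| split; auto; apply clamp_I11].
    change (Rabs (clamp z - x) < d). eapply Rle_lt_trans; [apply clamp_lip| exact Hz].
Qed.

Lemma Dv_Csum S N (F G : nat -> R -> C) : (forall i, (i < N)%nat -> Dv S (F i) (G i)) ->
  Dv S (fun x => Csum N (fun i => F i x)) (fun x => Csum N (fun i => G i x)).
Proof.
  induction N; intros H; simpl.
  - apply Dv_const.
  - apply Dv_plus; auto.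
Qed.

Lemma Pr_scal w n c f : Pr w n (fun j => Cmult c (f j)) = fun j => Cmult c (Pr w n f j).
Proof.
  induction n; simpl; auto. rewrite IHn. apply functional_extensionality. intros. unfold Dl. ring.
Qed.

Lemma Pr_minus w n f g : Pr w n (fun j => Cminus (f j) (g j)) = fun j => Cminus (Pr w n f j) (Pr w n g j).
Proof.
  induction n; simpl; auto. rewrite IHn. apply functional_extensionality. intros. unfold Dl. ring.
Qed.

Lemma P0_Kop k q qh x : (forall r, I11 r -> q r = qh r) -> (forall r, continuous qh r) -> I11 x ->
  P0 k qh x = Kop k q x.
Proof.
  intros Eq Hc Hx. rewrite (Kop_split k q qh x); auto.
  - unfold P0, Afun, Bfun. f_equal. f_equal.
    unfold CRInt. change Copp with (@opp C_R_CompleteNormedModule).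
    apply (opp_RInt_swap (V := C_R_CompleteNormedModule)).
    apply ex_RInt_continuous. intros z _. apply cont_mult; auto. apply cont_Ke.
  - intros r Hr. apply Eq. unfold I11; lra.
Qed.

Definition Ec (alpha tau0 : R) (lam : C) : C := Cmult (Cplus lam (RtoC alpha)) (Cexp (Cmult lam (RtoC tau0))).
Definition kk (mu : nat -> C) (lam : C) (i : nat) : C := Cplus lam (mu i).
Definition ww (mu : nat -> C) (lam : C) (i : nat) : C := Cmult (kk mu lam i) (kk mu lam i).
Definition zeta0 (N : nat) (mu : nat -> C) (lam : C) : nat -> C := PC (ww mu lam) N.
Definition beta0 (N : nat) (alpha tau0 : R) (c mu : nat -> C) (lam : C) : nat -> C :=
  fun m => Cplus (Cmult (Ec alpha tau0 lam) (PC (ww mu lam) N m))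
                 (Csum N (fun i => Cmult (Cmult (c i) (Cmult (RtoC 2) (kk mu lam i))) (SC (ww mu lam) i N m))).

Definition dDf (N : nat) (alpha tau0 : R) (c mu : nat -> C) (lam : C) (dq : nat -> R -> C) (n : nat) (x : R) : C :=
  Cminus (Cmult (Ec alpha tau0 lam) (dq n x))
         (Csum N (fun i => Cmult (c i) (KD (kk mu lam i) (fun z => dq O (clamp z)) dq n x))).

Section Ex.
Variables (N : nat) (alpha tau0 : R) (c mu : nat -> C) (lam : C).
Variables (q : R -> C) (dq : nat -> R -> C).
Hypothesis HN : (1 <= N)%nat.
Hypothesis Hq : Cn_on_I (2 * N) q dq.

Let qh := fun z => dq O (clamp z).

Lemma qh_cont : forall r, continuous qh r.
Proof.
  destruct Hq as [_ [Hd _]]. apply cont_clamp. intros x Hx.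
  apply (Dv_cont I11 (dq O) (dq 1%nat)); auto. apply I11_Dv. apply Hd. lia.
Qed.

Lemma qh_eq : forall x, I11 x -> dq O x = qh x.
Proof. intros x Hx. unfold qh. rewrite clamp_id; auto. Qed.

Lemma dDf_0 : forall x, I11 x -> dDf N alpha tau0 c mu lam dq O x = Defs.Delta N alpha tau0 c mu lam q x.
Proof.
  intros x Hx. destruct Hq as [H0 _]. unfold dDf, Defs.Delta, Ec. rewrite H0 by auto. f_equal.
  apply Csum_ext. intros i _. f_equal. simpl. apply P0_Kop; auto.
  - intros r Hr. rewrite <- H0 by auto. apply qh_eq; auto.
  - apply qh_cont.
Qed.

Lemma dDf_chain : deriv_chain (2 * N) (dDf N alpha tau0 c mu lam dq).
Proof.
  destruct Hq as [H0 [Hd _]]. intros j Hj. apply Dv_I11. unfold dDf.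
  apply Dv_minus.
  - apply Dv_scal. apply I11_Dv. auto.
  - apply Dv_Csum. intros i _. apply Dv_scal. apply (Dv_KD _ qh qh_cont (2 * N)); auto.
    apply qh_eq.
Qed.

Lemma dDf_ident : forall x, I11 x ->
  Cplus (Csum N (fun k => Cmult (zeta0 N mu lam k) (dDf N alpha tau0 c mu lam dq (2 * k)%nat x)))
        (dDf N alpha tau0 c mu lam dq (2 * N)%nat x)
  = Csum (S N) (fun k => Cmult (beta0 N alpha tau0 c mu lam k) (dq (2 * k)%nat x)).
Proof.
  intros x Hx. set (w := ww mu lam).
  transitivity (Pr w N (fun n => dDf N alpha tau0 c mu lam dq n x) O).
  { rewrite Pr_rep. rewrite Csum_last. unfold zeta0. fold w. rewrite PC_top. rewrite Cmult_1_l. reflexivity. }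
  unfold dDf. rewrite Pr_minus, Pr_scal.
  rewrite (Pr_Csum w N N (fun i n => Cmult (c i) (KD (kk mu lam i) (fun z => dq O (clamp z)) dq n x))).
  rewrite (Csum_ext N _ (fun i => Cmult (c i) (Csum (S N) (fun m => Cmult (SC w i N m)
                 (Cmult (Copp (Cmult (RtoC 2) (kk mu lam i))) (dq (2 * m)%nat x)))))).
  2: { intros i Hi. rewrite Pr_scal. f_equal. rewrite (Pr_skip w i N) by auto.
       rewrite Pskip_rep. apply Csum_ext. intros m _. f_equal. simpl. unfold Dl.
       cbn [KD]. unfold w, ww. ring. }
  rewrite Pr_rep. unfold beta0. fold w. symmetry.
  rewrite (Csum_ext (S N) _ (fun m => Cplus (Cmult (Ec alpha tau0 lam) (Cmult (PC w N m) (dq (2 * m)%nat x)))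
            (Csum N (fun i => Cmult (Cmult (Cmult (c i) (Cmult (RtoC 2) (kk mu lam i))) (SC w i N m)) (dq (2 * m)%nat x)))))
    by (intros m _; cbv beta; rewrite Cmult_plus_distr_r; f_equal; [ring| rewrite (Cmult_comm (Csum _ _)), <- Csum_scal; apply Csum_ext; intros; ring]).
  rewrite Csum_plus, Csum_scal, Csum_swap.
  unfold Cminus. f_equal. rewrite <- Csum_opp. apply Csum_ext. intros i _.
  rewrite <- Csum_scal, <- Csum_opp. apply Csum_ext. intros m _. ring.
Qed.
End Ex.

Lemma existence N alpha tau0 c mu lam : (1 <= N)%nat ->
  op_identity N alpha tau0 c mu lam (zeta0 N mu lam) (beta0 N alpha tau0 c mu lam).
Proof.
  intros HN q dq Hq. exists (dDf N alpha tau0 c mu lam dq). split; [|split].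
  - apply (dDf_0 N alpha tau0 c mu lam q dq); auto.
  - apply (dDf_chain N alpha tau0 c mu lam q dq); auto.
  - apply dDf_ident.
Qed.

Lemma wf_proper x : I11 x -> ProperFilter' (wf I11 x).
Proof.
  intros Hx. constructor; [| apply wf_filter].
  unfold wf, within. intros [d Hd].
  set (e := Rmin (d / 2) 1).
  assert (He : 0 < e) by (unfold e; apply Rmin_pos; [apply Rdiv_lt_0_compat; [apply cond_pos|lra]|lra]).
  assert (He1 : e <= d / 2) by apply Rmin_l. assert (He2 : e <= 1) by apply Rmin_r.
  assert (Hd0 := cond_pos d). destruct Hx as [Hx1 Hx2].
  destruct (Rle_dec x 0).
  - apply (Hd (x + e)).
    + change (Rabs (x + e - x) < d). rewrite Rabs_right; lra.
    + split; [unfold I11; lra | lra].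
  - apply (Hd (x - e)).
    + change (Rabs (x - e - x) < d). rewrite Rabs_left; lra.
    + split; [unfold I11; lra | lra].
Qed.

Lemma Dv_unique f g1 g2 : Dv I11 f g1 -> Dv I11 f g2 -> forall x, I11 x -> g1 x = g2 x.
Proof.
  intros H1 H2 x Hx.
  apply (@filterlim_locally_unique _ R_AbsRing C_R_NormedModule _ (wf_proper x Hx) (quot f x)); auto.
Qed.

Lemma chain_unique M (d1 d2 : nat -> R -> C) :
  deriv_chain M d1 -> deriv_chain M d2 -> (forall x, I11 x -> d1 O x = d2 O x) ->
  forall n, (n <= M)%nat -> forall x, I11 x -> d1 n x = d2 n x.
Proof.
  intros H1 H2 H0 n. induction n; intros Hn; auto.
  apply (Dv_unique (d1 n)).
  - apply I11_Dv. apply H1. lia.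
  - apply (Dv_ext I11 (d2 n) (d1 n) (d2 (S n)) (d2 (S n))).
    + intros y Hy. symmetry. apply IHn; auto. lia.
    + auto.
    + apply I11_Dv. apply H2. lia.
Qed.

Lemma ident_dDf N alpha tau0 c mu lam zeta beta q dq :
  (1 <= N)%nat -> op_identity N alpha tau0 c mu lam zeta beta -> Cn_on_I (2 * N) q dq ->
  forall x, I11 x ->
  Cplus (Csum N (fun k => Cmult (zeta k) (dDf N alpha tau0 c mu lam dq (2 * k)%nat x))) (dDf N alpha tau0 c mu lam dq (2 * N)%nat x)
  = Csum (S N) (fun k => Cmult (beta k) (dq (2 * k)%nat x)).
Proof.
  intros HN Hop Hq x Hx. destruct (Hop q dq Hq) as [dD [H0 [Hc Hi]]].
  assert (E : forall n, (n <= 2 * N)%nat -> dD n x = dDf N alpha tau0 c mu lam dq n x).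
  { intros n Hn. apply (chain_unique (2 * N)); auto.
    - apply (dDf_chain N alpha tau0 c mu lam q dq); auto.
    - intros y Hy. rewrite H0 by auto. symmetry. apply (dDf_0 N alpha tau0 c mu lam q dq); auto. }
  rewrite <- Hi by auto. rewrite E by lia. f_equal. apply Csum_ext. intros m Hm. rewrite E by lia. auto.
Qed.



Lemma quot_derive (f : R -> C) x l : filterlim (quot f x) (wf (fun _ => True) x) (locally l) ->
  is_derive (V := C_R_NormedModule) f x l.
Proof.
  intros H. split; [apply is_linear_scal_l|].
  intros x0 Hx0. apply (@is_filter_lim_locally_unique R_AbsRing R_NormedModule) in Hx0. subst x0.
  intros eps. assert (H' := proj1 (lim_eps _ _) H eps (cond_pos eps)).
  unfold wf, within in H'. revert H'. apply filter_imp. intros y Hy.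
  change R in y. rewrite <- !Cmod_norm.
  enough (Hg : Cmod (Cminus (Cminus (f y) (f x)) (Cmult (RtoC (y - x)) l)) <= eps * Rabs (y - x))
    by (rewrite <- scal_R_Cmult in Hg; exact Hg).
  destruct (Req_dec y x) as [->|Hne].
  - replace (Cminus (Cminus (f x) (f x)) (Cmult (RtoC (x - x)) l)) with (RtoC 0).
    rewrite Cmod_0. apply Rmult_le_pos; [left; apply cond_pos| apply Rabs_pos].
    rewrite Rminus_diag. ring.
  - specialize (Hy (conj I Hne)).
    assert (Hh : y - x <> 0) by lra.
    replace (Cminus (Cminus (f y) (f x)) (Cmult (RtoC (y - x)) l)) with
      (Cmult (RtoC (y - x)) (Cminus (quot f x y) l)).
    + rewrite Cmod_mult, Cmod_R. rewrite Rmult_comm. apply Rmult_le_compat_r; [apply Rabs_pos| lra].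
    + unfold quot.
      assert (H1 : Cmult (RtoC (y - x)) (RtoC (/ (y - x))) = RtoC 1).
      { rewrite <- RtoC_mult, Rinv_r by auto. reflexivity. }
      transitivity (Cminus (Cmult (Cmult (RtoC (y - x)) (RtoC (/ (y - x)))) (Cminus (f y) (f x))) (Cmult (RtoC (y - x)) l)).
      ring. rewrite H1. ring.
Qed.

Lemma is_derive_Ke a x : is_derive (V := C_R_NormedModule) (Ke a) x (Cmult a (Ke a x)).
Proof. apply quot_derive. apply Dv_Ke. auto. Qed.

Lemma RInt_Ke a u v : a <> RtoC 0 ->
  CRInt (Ke a) u v = Cmult (Cinv a) (Cminus (Ke a v) (Ke a u)).
Proof.
  intros Ha. unfold CRInt. apply (is_RInt_unique (V := C_R_CompleteNormedModule)).
  assert (H := @is_RInt_derive C_R_CompleteNormedModule (fun r => Cmult (Cinv a) (Ke a r)) (Ke a) u v).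
  assert (E : @minus C_R_NormedModule (Cmult (Cinv a) (Ke a v)) (Cmult (Cinv a) (Ke a u)) = Cmult (Cinv a) (Cminus (Ke a v) (Ke a u))).
  { change (Cminus (Cmult (Cinv a) (Ke a v)) (Cmult (Cinv a) (Ke a u)) = Cmult (Cinv a) (Cminus (Ke a v) (Ke a u))). ring. }
  rewrite <- E. apply H.
  - intros r _. apply quot_derive.
    assert (L := Dv_scal (fun _ => True) (Cinv a) _ _ (Dv_Ke (fun _ => True) a) r I).
    replace (Ke a r) with (Cmult (Cinv a) (Cmult a (Ke a r))) by (field; auto). exact L.
  - intros r _. apply cont_Ke.
Qed.

Definition dqs (s : C) (j : nat) (x : R) : C := Cmult (Cpow s j) (Ke s x).

Lemma cont_within (f : R -> C) x : continuous f x -> filterlim f (within I11 (locally x)) (locally (f x)).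
Proof. intros H P HP. specialize (H P HP). unfold filtermap, within in *. revert H. apply filter_imp. auto. Qed.

Lemma Cn_dqs M s : Cn_on_I M (Ke s) (dqs s).
Proof.
  split; [|split].
  - intros x _. unfold dqs. simpl. ring.
  - intros j _. apply Dv_I11. unfold dqs.
    eapply Dv_ext; [intros; reflexivity | | apply Dv_scal; apply Dv_Ke].
    intros y _. simpl. ring.
  - intros x _. apply cont_within. unfold dqs. apply cont_mult.
    + apply filterlim_const.
    + apply cont_Ke.
Qed.

Lemma Ke_ne0 a x : Ke a x <> RtoC 0.
Proof. apply Cexp_nz. Qed.

Lemma Kop_Ke k s x : Cplus k s <> RtoC 0 -> Cminus s k <> RtoC 0 -> I11 x ->
  Kop k (Ke s) x = Cplus (Cmult (Cminus (Cinv (Cplus k s)) (Cinv (Cminus s k))) (Ke s x))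
                         (Cplus (Cmult (Cmult (Ke (Cminus s k) 1) (Cinv (Cminus s k))) (Ke k x))
                                (Cmult (Copp (Cmult (Ke (Cplus k s) (-1)) (Cinv (Cplus k s)))) (Ke (Copp k) x))).
Proof.
  intros H1 H2 Hx. rewrite (Kop_split k (Ke s) (Ke s) x); auto.
  2: intros; apply cont_Ke.
  assert (E1 : (fun r => Cmult (Ke k r) (Ke s r)) = Ke (Cplus k s)).
  { apply functional_extensionality. intros r. rewrite Ke_add. auto. }
  assert (E2 : (fun r => Cmult (Ke (Copp k) r) (Ke s r)) = Ke (Cminus s k)).
  { apply functional_extensionality. intros r. unfold Cminus. rewrite Cplus_comm, Ke_add. auto. }
  rewrite E1, E2, !RInt_Ke by auto.
  assert (E3 : Ke (Cminus s k) x = Cmult (Ke s x) (Ke (Copp k) x)) by (apply Ke_add).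
  rewrite (Ke_add k s x), E3.
  assert (Hi : Ke (Copp k) x = Cinv (Ke k x)).
  { assert (Hn := Ke_ne0 k x). rewrite <- (Cmult_1_r (Ke (Copp k) x)).
    rewrite <- (Cinv_r (Ke k x)) by auto. rewrite Cmult_assoc, Ke_inv. ring. }
  rewrite Hi. assert (Hn := Ke_ne0 k x). field. repeat split; auto.
Qed.

Lemma stepA N alpha tau0 c mu lam zeta' beta' q dq :
  (1 <= N)%nat -> op_identity N alpha tau0 c mu lam zeta' beta' -> Cn_on_I (2 * N) q dq ->
  forall x, I11 x ->
  Csum N (fun m => Cmult (Cminus (zeta0 N mu lam m) (zeta' m)) (dDf N alpha tau0 c mu lam dq (2 * m)%nat x))
  = Csum (S N) (fun m => Cmult (Cminus (beta0 N alpha tau0 c mu lam m) (beta' m)) (dq (2 * m)%nat x)).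
Proof.
  intros HN Hop Hq x Hx.
  assert (I1 := dDf_ident N alpha tau0 c mu lam dq x Hx).
  assert (I2 := ident_dDf N alpha tau0 c mu lam zeta' beta' q dq HN Hop Hq x Hx).
  rewrite (Csum_ext N _ (fun m => Cminus (Cmult (zeta0 N mu lam m) (dDf N alpha tau0 c mu lam dq (2 * m)%nat x))
                                          (Cmult (zeta' m) (dDf N alpha tau0 c mu lam dq (2 * m)%nat x)))) by (intros; ring).
  rewrite (Csum_ext (S N) _ (fun m => Cminus (Cmult (beta0 N alpha tau0 c mu lam m) (dq (2 * m)%nat x))
                                          (Cmult (beta' m) (dq (2 * m)%nat x)))) by (intros; ring).
  rewrite !Csum_minus. rewrite <- I1, <- I2. ring.
Qed.

Fixpoint kap (k s : C) (m : nat) : C :=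
  match m with O => RtoC 0 | S m' => Cminus (Cmult (Cmult k k) (kap k s m')) (Cmult (Cmult (RtoC 2) k) (Cpow s (2 * m'))) end.

Lemma KD_even k s qh m x :
  KD k qh (dqs s) (2 * m) x = Cplus (Cmult (Cpow (Cmult k k) m) (P0 k qh x)) (Cmult (kap k s m) (Ke s x)).
Proof.
  induction m.
  - simpl. ring.
  - replace (2 * S m)%nat with (S (S (2 * m))) by lia. cbn [KD]. rewrite IHm.
    simpl kap. unfold dqs. simpl Cpow. ring.
Qed.

Lemma Csum_mulr n f X : Csum n (fun i => Cmult (f i) X) = Cmult (Csum n f) X.
Proof. induction n; simpl. ring. rewrite IHn. ring. Qed.

Lemma Csum_L1 n f g h X : Csum n (fun i => Cmult (f i) (Cplus (g i) (Cmult (h i) X))) =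
  Cplus (Csum n (fun i => Cmult (f i) (g i))) (Cmult (Csum n (fun i => Cmult (f i) (h i))) X).
Proof. induction n; simpl. ring. rewrite IHn. ring. Qed.

Lemma Csum_L2 n f g D : Csum n (fun i => Cmult (f i) (Cmult D (g i))) = Cmult D (Csum n (fun i => Cmult (f i) (g i))).
Proof. induction n; simpl. ring. rewrite IHn. ring. Qed.

Definition qhs (s : C) := fun z => dqs s O (clamp z).

Lemma stepB N alpha tau0 c mu lam zeta' beta' s :
  (1 <= N)%nat -> op_identity N alpha tau0 c mu lam zeta' beta' ->
  exists G, forall x, I11 x ->
  Csum N (fun i => Cmult (c i) (Cmult (Csum N (fun m => Cmult (Cminus (zeta0 N mu lam m) (zeta' m)) (Cpow (ww mu lam i) m)))
                                     (P0 (kk mu lam i) (qhs s) x)))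
  = Cmult G (Ke s x).
Proof.
  intros HN Hop.
  set (D := fun m => Cminus (zeta0 N mu lam m) (zeta' m)).
  set (b := fun m => Cminus (beta0 N alpha tau0 c mu lam m) (beta' m)).
  set (E := Ec alpha tau0 lam).
  set (G1 := Csum N (fun m => Cmult (D m) (Cminus (Cmult E (Cpow s (2 * m))) (Csum N (fun i => Cmult (c i) (kap (kk mu lam i) s m)))))).
  exists (Cminus G1 (Csum (S N) (fun m => Cmult (b m) (Cpow s (2 * m))))).
  intros x Hx.
  assert (HA := stepA N alpha tau0 c mu lam zeta' beta' (Ke s) (dqs s) HN Hop (Cn_dqs _ s) x Hx).
  fold D b in HA.
  set (X := Ke s x) in *.
  rewrite (Csum_ext (S N) _ (fun m => Cmult (Cmult (b m) (Cpow s (2 * m))) X)) in HA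
    by (intros; cbv beta; unfold dqs; fold X; unfold b; ring).
  rewrite Csum_mulr in HA.
  rewrite (Csum_ext N _ (fun m => Cminus (Cmult (Cmult (D m) (Cminus (Cmult E (Cpow s (2 * m))) (Csum N (fun i => Cmult (c i) (kap (kk mu lam i) s m))))) X)
                      (Csum N (fun i => Cmult (c i) (Cmult (D m) (Cmult (Cpow (ww mu lam i) m) (P0 (kk mu lam i) (qhs s) x))))))) in HA.
  2: { intros m _. unfold dDf. fold E.
       rewrite (Csum_ext N _ (fun i => Cmult (c i) (Cplus (Cmult (Cpow (ww mu lam i) m) (P0 (kk mu lam i) (qhs s) x)) (Cmult (kap (kk mu lam i) s m) X))))
         by (intros i _; rewrite KD_even; reflexivity).
       rewrite Csum_L1, Csum_L2. unfold dqs. fold X. unfold D. ring. }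
  rewrite Csum_minus, Csum_mulr, Csum_swap in HA. fold G1 in HA.
  rewrite (Csum_ext N (fun i => Csum N _) (fun i => Cmult (c i) (Cmult (Csum N (fun m => Cmult (D m) (Cpow (ww mu lam i) m))) (P0 (kk mu lam i) (qhs s) x)))) in HA.
  2: { intros i _. rewrite <- Csum_mulr, <- Csum_scal. apply Csum_ext. intros m _. ring. }
  fold D. match goal with |- ?L = _ => transitivity (Cminus (Cmult G1 X) (Cminus (Cmult G1 X) L)); [ring|] end. unfold D in HA. rewrite HA. ring.
Qed.

Lemma Cexp_eq1 z : Cexp z = RtoC 1 -> Cmod z < 2 * PI -> z = RtoC 0.
Proof.
  destruct z as [a b]. unfold Cexp. simpl. intros H Hm. injection H as H1 H2.
  assert (Ha := exp_pos a).
  assert (Hs : sin b = 0).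
  { apply Rmult_eq_reg_l with (exp a); lra. }
  assert (Hb : Rabs b < 2 * PI).
  { eapply Rle_lt_trans; [| exact Hm]. eapply Rle_trans; [| apply (Rmax_Cmod (a, b))]. simpl. apply Rmax_r. }
  assert (Hpi := PI_RGT_0).
  destruct (sin_eq_0_0 b Hs) as [k Hk].
  assert (Hc : 0 < cos b).
  { apply Rmult_lt_reg_l with (exp a); lra. }
  assert (Hk2 : (-2 < k < 2)%Z).
  { subst b. rewrite Rabs_mult, (Rabs_right PI) in Hb by lra.
    assert (Rabs (IZR k) < 2) by (apply Rmult_lt_reg_r with PI; lra).
    apply Rabs_def2 in H. destruct H. split; apply lt_IZR; simpl; lra. }
  assert (Hk0 : k = 0%Z).
  { destruct (Z.eq_dec k 0) as [|Hne]; auto.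
    assert (k = 1%Z \/ k = (-1)%Z) as [-> | ->] by lia; subst b; simpl in Hc.
    - rewrite Rmult_1_l, cos_PI in Hc. lra.
    - replace (-1 * PI) with (- PI) in Hc by ring. rewrite cos_neg, cos_PI in Hc. lra. }
  subst k b. rewrite Rmult_0_l, cos_0, Rmult_1_r in H1.
  rewrite <- exp_0 in H1. apply exp_inv in H1. subst a. unfold RtoC. f_equal. ring.
Qed.

Lemma Ke_x_add f a b : Ke f (a + b) = Cmult (Ke f a) (Ke f b).
Proof. unfold Ke. rewrite <- Cexp_add. f_equal. rewrite RtoC_plus. ring. Qed.

Lemma Ke_pow f h n : Ke f (INR n * h) = Cpow (Ke f h) n.
Proof.
  induction n.
  - simpl. rewrite Rmult_0_l. unfold Ke. rewrite Cmult_0_r. apply Cexp_0.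
  - rewrite S_INR. replace ((INR n + 1) * h) with (INR n * h + h) by ring.
    rewrite Ke_x_add, IHn. simpl. ring.
Qed.

Lemma Ke_inj a b h : 0 < h -> Cmod (Cminus a b) * h < 2 * PI -> Ke a h = Ke b h -> a = b.
Proof.
  intros Hh Hm E.
  assert (E1 : Cexp (Cmult (Cminus a b) (RtoC h)) = RtoC 1).
  { change (Ke (Cminus a b) h = RtoC 1). unfold Cminus. rewrite Ke_add, E, Cmult_comm, Ke_inv. reflexivity. }
  apply Cexp_eq1 in E1.
  - rewrite Cmult_comm in E1. apply Cmult_eq0 in E1. apply Ceq_minus. exact E1. intros Hc. injection Hc. lra.
  - rewrite Cmod_mult, Cmod_R, Rabs_right by lra. exact Hm.
Qed.

Fixpoint Rsum (n : nat) (f : nat -> R) : R := match n with O => 0 | S m => Rsum m f + f m end.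

Lemma Rsum_ge f n i : (forall j, 0 <= f j) -> (i < n)%nat -> f i <= Rsum n f.
Proof.
  intros Hf. induction n; intros Hi; [lia|]. simpl.
  assert (0 <= Rsum n f). { clear -Hf. induction n; simpl. lra. specialize (Hf n). lra. }
  destruct (Nat.eq_dec i n) as [->|Hne]. lra. specialize (IHn ltac:(lia)). specialize (Hf n). lra.
Qed.

Lemma exp_indep M (W f : nat -> C) :
  (forall t t', (t < M)%nat -> (t' < M)%nat -> t <> t' -> f t <> f t') ->
  (forall x, I11 x -> Csum M (fun t => Cmult (W t) (Ke (f t) x)) = RtoC 0) ->
  forall t, (t < M)%nat -> W t = RtoC 0.
Proof.
  intros Hf HW.
  set (B := 1 + Rsum M (fun t => Cmod (f t))).
  assert (HB : forall t, (t < M)%nat -> Cmod (f t) <= B - 1).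
  { intros t Ht. unfold B. replace (1 + Rsum M (fun t => Cmod (f t)) - 1) with (Rsum M (fun t => Cmod (f t))) by ring.
    apply (Rsum_ge (fun t => Cmod (f t))); auto. intros; apply Cmod_ge_0. }
  assert (HB1 : 1 <= B). { unfold B. assert (0 <= Rsum M (fun t => Cmod (f t))). { clear. induction M; simpl. lra. assert (Hc := Cmod_ge_0 (f M)). lra. } lra. }
  assert (HM := pos_INR M).
  set (h := / (INR M + 2 * B)).
  assert (Hh : 0 < h) by (unfold h; apply Rinv_0_lt_compat; lra).
  assert (Hh1 : h * (INR M + 2 * B) = 1) by (unfold h; field; lra).
  assert (Hpi := PI_RGT_0). assert (Hpi3 := PI2_1).
  intros t Ht.
  assert (Hv := vdm_T M (fun t => Cmult (W t) (Ke (f t) (-1))) (fun t => Ke (f t) h)).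
  assert (Z : Cmult (W t) (Ke (f t) (-1)) = RtoC 0).
  { apply Hv; auto.
    - intros u u' Hu Hu' Hne E. apply (Hf u u' Hu Hu' Hne). apply (Ke_inj _ _ h Hh); auto.
      assert (Cmod (Cminus (f u) (f u')) <= 2 * B).
      { unfold Cminus. eapply Rle_trans; [apply Cmod_triangle|]. rewrite Cmod_opp.
        assert (G1 := HB u Hu). assert (G2 := HB u' Hu'). lra. }
      apply Rle_lt_trans with (2 * B * h); [apply Rmult_le_compat_r; lra|].
      assert (2 * B * h <= 1) by nra. lra.
    - intros n Hn. rewrite <- (HW (-1 + INR n * h)).
      + apply Csum_ext. intros u _. rewrite Ke_x_add, Ke_pow. ring.
      + assert (INR n <= INR M) by (apply le_INR; lia).
        assert (0 <= INR n * h) by (apply Rmult_le_pos; [apply pos_INR| lra]).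
        assert (INR n * h <= INR M * h) by (apply Rmult_le_compat_r; lra).
        assert (0 <= B * h) by (apply Rmult_le_pos; lra).
        assert (h * INR M + 2 * (B * h) = 1) by (rewrite <- Hh1; ring).
        unfold I11. lra. }
  rewrite Cmult_comm in Z. apply Cmult_eq0 in Z; [exact Z| apply Ke_ne0].
Qed.

Lemma Csum_add a b g : Csum (a + b) g = Cplus (Csum a g) (Csum b (fun t => g (a + t)%nat)).
Proof.
  induction b; simpl. rewrite Nat.add_0_r. ring.
  rewrite Nat.add_succ_r. simpl. rewrite IHb. ring.
Qed.

Lemma Cmod_lt_ne z (r : R) : Cmod z < r -> z <> RtoC r.
Proof. intros H E. subst z. rewrite Cmod_R in H. assert (Rabs r >= r) by (unfold Rabs; destruct Rcase_abs; lra). lra. Qed.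

Lemma sq_ne_eq a b : Cmult a a <> Cmult b b -> a <> b /\ a <> Copp b.
Proof. intros H. split; intros E; apply H; subst; ring. Qed.

Lemma opp_self k : k <> RtoC 0 -> k <> Copp k.
Proof.
  intros H E. apply H. replace k with (Cmult (RtoC (/2)) (Cplus k k)).
  rewrite E at 2. ring.
  rewrite <- (Cmult_1_l k) at 3. replace (RtoC 1) with (Cmult (RtoC (/2)) (RtoC 2)).
  ring. rewrite <- RtoC_mult. f_equal. field.
Qed.

Lemma Ke_real_ne s : 0 < s -> Ke (RtoC s) 1 <> Ke (RtoC s) (-1).
Proof.
  intros Hs E. unfold Ke in E. rewrite !Cexp_ay in E. simpl in E. injection E as E1 _.
  rewrite !Rmult_0_l, cos_0, !Rmult_1_r in E1. apply exp_inv in E1. lra.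
Qed.

Definition fr (N : nat) (k : nat -> C) (s : R) (t : nat) : C :=
  if Nat.ltb t N then k t
  else if Nat.ltb t (N + N) then (if Ceq_dec (k (t - N)%nat) (RtoC 0) then RtoC (2 * s) else Copp (k (t - N)%nat))
  else RtoC s.

Lemma fr_distinct N k s :
  0 < s ->
  (forall i j, (i < N)%nat -> (j < N)%nat -> i <> j -> Cmult (k i) (k i) <> Cmult (k j) (k j)) ->
  (forall i, (i < N)%nat -> Cmod (k i) < s) ->
  forall t t', (t < S (N + N))%nat -> (t' < S (N + N))%nat -> t <> t' -> fr N k s t <> fr N k s t'.
Proof.
  intros Hs Hsq Hm.
  assert (Main : forall t t', (t' < S (N + N))%nat -> (t < t')%nat -> fr N k s t <> fr N k s t').
  { intros t t' Ht' Htt. unfold fr.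
    destruct (Nat.ltb_spec t N); destruct (Nat.ltb_spec t' N).
    - apply sq_ne_eq. apply Hsq; lia.
    - destruct (Nat.ltb_spec t' (N + N)).
      + destruct (Ceq_dec (k (t' - N)%nat) (RtoC 0)).
        * apply Cmod_lt_ne. specialize (Hm t ltac:(lia)). lra.
        * destruct (Nat.eq_dec t (t' - N)) as [E|E].
          -- rewrite E. apply opp_self. auto.
          -- apply sq_ne_eq. apply Hsq; lia.
      + apply Cmod_lt_ne. apply Hm. lia.
    - lia.
    - destruct (Nat.ltb_spec t (N + N)); destruct (Nat.ltb_spec t' (N + N)).
      + destruct (Ceq_dec (k (t - N)%nat) (RtoC 0)); destruct (Ceq_dec (k (t' - N)%nat) (RtoC 0)).
        * exfalso. apply (Hsq (t - N)%nat (t' - N)%nat); try lia. rewrite e, e0. reflexivity.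
        * intros E. symmetry in E. revert E. apply Cmod_lt_ne. rewrite Cmod_opp. specialize (Hm (t' - N)%nat ltac:(lia)). lra.
        * apply Cmod_lt_ne. rewrite Cmod_opp. specialize (Hm (t - N)%nat ltac:(lia)). lra.
        * intros E. apply (proj1 (sq_ne_eq _ _ (Hsq (t - N)%nat (t' - N)%nat ltac:(lia) ltac:(lia) ltac:(lia)))).
          replace (k (t - N)%nat) with (Copp (Copp (k (t - N)%nat))) by ring. rewrite E. ring.
      + destruct (Ceq_dec (k (t - N)%nat) (RtoC 0)).
        * intros E. injection E. lra.
        * apply Cmod_lt_ne. rewrite Cmod_opp. apply Hm. lia.
      + lia.
      + lia. }
  intros t t' Ht Ht' Hne. destruct (Nat.lt_total t t') as [H|[H|H]]; [| lia |].
  - apply Main; auto.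
  - intros E. symmetry in E. revert E. apply Main; auto.
Qed.

Lemma stepD N (k a : nat -> C) (s : R) (G : C) :
  0 < s ->
  (forall i j, (i < N)%nat -> (j < N)%nat -> i <> j -> Cmult (k i) (k i) <> Cmult (k j) (k j)) ->
  (forall i, (i < N)%nat -> Cmod (k i) < s) ->
  (forall x, I11 x -> Csum N (fun i => Cmult (a i) (Kop (k i) (Ke (RtoC s)) x)) = Cmult G (Ke (RtoC s) x)) ->
  forall i, (i < N)%nat -> a i = RtoC 0.
Proof.
  intros Hs Hsq Hm HK.
  set (S0 := RtoC s).
  set (al := fun i => Cminus (Cinv (Cplus (k i) S0)) (Cinv (Cminus S0 (k i)))).
  set (uu := fun i => Cmult (Ke (Cminus S0 (k i)) 1) (Cinv (Cminus S0 (k i)))).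
  set (vv := fun i => Copp (Cmult (Ke (Cplus (k i) S0) (-1)) (Cinv (Cplus (k i) S0)))).
  assert (Hp : forall i, (i < N)%nat -> Cplus (k i) S0 <> RtoC 0).
  { intros i Hi E. assert (k i = RtoC (- s)) by (rewrite RtoC_opp; unfold S0 in E; replace (k i) with (Cminus (Cplus (k i) (RtoC s)) (RtoC s)) by ring; rewrite E; ring).
    specialize (Hm i Hi). rewrite H, Cmod_R, Rabs_left in Hm by lra. lra. }
  assert (Hn : forall i, (i < N)%nat -> Cminus S0 (k i) <> RtoC 0).
  { intros i Hi E. assert (k i = RtoC s) by (unfold S0 in E; replace (k i) with (Cminus (RtoC s) (Cminus (RtoC s) (k i))) by ring; rewrite E; ring).
    specialize (Hm i Hi). rewrite H, Cmod_R, Rabs_right in Hm by lra. lra. }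
  set (W := fun t => if Nat.ltb t N then Cplus (Cmult (a t) (uu t)) (if Ceq_dec (k t) (RtoC 0) then Cmult (a t) (vv t) else RtoC 0)
                     else if Nat.ltb t (N + N) then (if Ceq_dec (k (t - N)%nat) (RtoC 0) then RtoC 0 else Cmult (a (t - N)%nat) (vv (t - N)%nat))
                     else Cminus (Csum N (fun i => Cmult (a i) (al i))) G).
  assert (HW : forall t, (t < S (N + N))%nat -> W t = RtoC 0).
  { apply (exp_indep (S (N + N)) W (fr N k s)).
    - apply fr_distinct; auto.
    - intros x Hx. rewrite Csum_last, Csum_add, <- Csum_plus.
      unfold W, fr. rewrite (proj2 (Nat.ltb_ge (N + N) N)) by lia. rewrite (proj2 (Nat.ltb_ge (N + N) (N + N))) by lia.
      rewrite (Csum_ext N _ (fun t => Cplus (Cmult (a t) (Cmult (uu t) (Ke (k t) x))) (Cmult (a t) (Cmult (vv t) (Ke (Copp (k t)) x))))).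
      2: { intros t Ht. rewrite (proj2 (Nat.ltb_lt t N)) by lia. rewrite (proj2 (Nat.ltb_ge (N + t) N)) by lia.
           rewrite (proj2 (Nat.ltb_lt (N + t) (N + N))) by lia. replace (N + t - N)%nat with t by lia.
           destruct (Ceq_dec (k t) (RtoC 0)) as [E|E].
           - rewrite E. replace (Copp (RtoC 0)) with (RtoC 0) by ring. ring.
           - ring. }
      specialize (HK x Hx). fold S0 in HK.
      rewrite (Csum_ext N _ (fun i => Cplus (Cmult (Cmult (a i) (al i)) (Ke S0 x))
              (Cplus (Cmult (a i) (Cmult (uu i) (Ke (k i) x))) (Cmult (a i) (Cmult (vv i) (Ke (Copp (k i)) x)))))) in HK.
      2: { intros i Hi. rewrite Kop_Ke; auto. unfold al, uu, vv. ring. }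
      rewrite Csum_plus, Csum_mulr in HK.
      fold S0. transitivity (Cminus (Cplus (Cmult (Csum N (fun i => Cmult (a i) (al i))) (Ke S0 x))
               (Csum N (fun i => Cplus (Cmult (a i) (Cmult (uu i) (Ke (k i) x))) (Cmult (a i) (Cmult (vv i) (Ke (Copp (k i)) x))))))
               (Cmult G (Ke S0 x))).
      + ring.
      + rewrite HK. ring. }
  intros i Hi. specialize (HW i ltac:(lia)). unfold W in HW. rewrite (proj2 (Nat.ltb_lt i N)) in HW by lia.
  destruct (Ceq_dec (k i) (RtoC 0)) as [E|E].
  - assert (Hu : Cplus (uu i) (vv i) <> RtoC 0).
    { unfold uu, vv. rewrite E. intros Z.
      assert (Hs0 : S0 <> RtoC 0) by (unfold S0; intros Z'; injection Z'; lra).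
      apply (Ke_real_ne s Hs). fold S0.
      replace (Cminus S0 (RtoC 0)) with S0 in Z by ring. replace (Cplus (RtoC 0) S0) with S0 in Z by ring.
      replace (Ke S0 1) with (Cplus (Cmult (Cplus (Cmult (Ke S0 1) (Cinv S0)) (Copp (Cmult (Ke S0 (-1)) (Cinv S0)))) S0) (Ke S0 (-1)))
        by (field; auto).
      rewrite Z. ring. }
    replace (a i) with (Cmult (Cinv (Cplus (uu i) (vv i))) (Cplus (Cmult (a i) (uu i)) (Cmult (a i) (vv i)))) by (field; auto).
    rewrite HW. ring.
  - rewrite Cplus_0_r in HW. rewrite Cmult_comm in HW. apply Cmult_eq0 in HW; auto.
    unfold uu. apply Cmult_neq_0; [apply Ke_ne0|]. intros Z. apply (Hn i Hi).
    replace (Cminus S0 (k i)) with (Cmult (Cminus S0 (k i)) (Cmult (Cminus S0 (k i)) (Cinv (Cminus S0 (k i))))) by (field; auto).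
    rewrite Z. ring.
Qed.

Lemma Cpow_2m s m : Cpow s (2 * m) = Cpow (Cmult s s) m.
Proof.
  induction m. reflexivity.
  replace (2 * S m)%nat with (S (S (2 * m))) by lia. rewrite !Cpow_S, IHm. ring.
Qed.

Lemma Ke_at0 a : Ke a 0 = RtoC 1.
Proof. unfold Ke. rewrite Cmult_0_r. apply Cexp_0. Qed.

Theorem lemma3p12 (N : nat) (alpha tau0 : R) (c mu : nat -> C) (lam : C) :
  (1 <= N)%nat -> 0 < alpha -> 0 <= tau0 ->
  (forall i, (i < N)%nat -> c i <> RtoC 0) ->
  (forall i j, (i < N)%nat -> (j < N)%nat -> i <> j -> mu i <> mu j) ->
  (* lambda not in S *)
  (forall i j, (i < N)%nat -> (j < N)%nat -> i <> j ->
     Cmult (Cplus lam (mu i)) (Cplus lam (mu i))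
       <> Cmult (Cplus lam (mu j)) (Cplus lam (mu j))) ->
  exists zeta beta : nat -> C,
    op_identity N alpha tau0 c mu lam zeta beta /\
    forall zeta' beta' : nat -> C,
      op_identity N alpha tau0 c mu lam zeta' beta' ->
      (forall k, (k < N)%nat -> zeta' k = zeta k) /\
      (forall k, (k <= N)%nat -> beta' k = beta k).
Proof.
  intros HN Ha Ht Hc Hmu Hsq.
  exists (zeta0 N mu lam), (beta0 N alpha tau0 c mu lam). split; [apply existence; auto|].
  intros zeta' beta' Hop.
  set (D := fun m => Cminus (zeta0 N mu lam m) (zeta' m)).
  set (b := fun m => Cminus (beta0 N alpha tau0 c mu lam m) (beta' m)).
  assert (HD : forall m, (m < N)%nat -> D m = RtoC 0).
  { set (s := 1 + Rsum N (fun i => Cmod (kk mu lam i))).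
    assert (Hs0 : 0 <= Rsum N (fun i => Cmod (kk mu lam i))).
    { clear. induction N; simpl. lra. assert (Hc := Cmod_ge_0 (kk mu lam N)). lra. }
    assert (Hs : 0 < s) by (unfold s; lra).
    assert (Hm : forall i, (i < N)%nat -> Cmod (kk mu lam i) < s).
    { intros i Hi. unfold s. assert (Cmod (kk mu lam i) <= Rsum N (fun i => Cmod (kk mu lam i))).
      { apply (Rsum_ge (fun i => Cmod (kk mu lam i))); auto. intros; apply Cmod_ge_0. } lra. }
    destruct (stepB N alpha tau0 c mu lam zeta' beta' (RtoC s) HN Hop) as [G HG].
    assert (Hcont := qh_cont N (Ke (RtoC s)) (dqs (RtoC s)) HN (Cn_dqs _ _)).
    assert (Ha0 := stepD N (kk mu lam) (fun i => Cmult (c i) (Csum N (fun m => Cmult (D m) (Cpow (ww mu lam i) m)))) s G Hs).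
    assert (Hai : forall i, (i < N)%nat -> Cmult (c i) (Csum N (fun m => Cmult (D m) (Cpow (ww mu lam i) m))) = RtoC 0).
    { apply Ha0.
      - intros i j Hi Hj Hij. apply Hsq; auto.
      - exact Hm.
      - intros x Hx. rewrite <- (HG x Hx). apply Csum_ext. intros i Hi.
        rewrite <- (P0_Kop (kk mu lam i) (Ke (RtoC s)) (qhs (RtoC s)) x); auto.
        + unfold D. ring.
        + intros r Hr. unfold qhs, dqs. rewrite clamp_id by auto. simpl. ring. }
    destruct N as [|M]; [lia|]. intros m Hm0.
    apply (poly_roots M D (ww mu lam)).
    - intros i j Hi Hj Hij. apply Hsq; lia.
    - intros i Hi. unfold Pev. specialize (Hai i ltac:(lia)).
      apply Cmult_eq0 in Hai; auto. apply Hc. lia.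
    - lia. }
  split.
  - intros m Hm. specialize (HD m Hm). unfold D in HD.
    replace (zeta' m) with (Cminus (zeta0 N mu lam m) (Cminus (zeta0 N mu lam m) (zeta' m))) by ring.
    rewrite HD. ring.
  - assert (Hb : forall m, (m <= N)%nat -> b m = RtoC 0).
    { apply (poly_roots N b (fun t => Cmult (RtoC (INR t + 1)) (RtoC (INR t + 1)))).
      - intros i j Hi Hj Hij E. apply Hij. rewrite <- !RtoC_mult in E. injection E as E.
        assert (Hi0 := pos_INR i). assert (Hj0 := pos_INR j).
        assert (INR i = INR j) by nra. apply INR_eq. auto.
      - intros t Htt. set (st := RtoC (INR t + 1)).
        assert (HA := stepA N alpha tau0 c mu lam zeta' beta' (Ke st) (dqs st) HN Hop (Cn_dqs _ _) 0 ltac:(unfold I11; lra)).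
        rewrite Csum_zero in HA by (intros m Hm; cbv beta; assert (HDm := HD m Hm); unfold D in HDm; rewrite HDm; ring).
        unfold Pev. rewrite HA. apply Csum_ext. intros m _. unfold dqs. rewrite Ke_at0, Cpow_2m. unfold b. ring. }
    intros m Hm. specialize (Hb m Hm). unfold b in Hb.
    replace (beta' m) with (Cminus (beta0 N alpha tau0 c mu lam m) (Cminus (beta0 N alpha tau0 c mu lam m) (beta' m))) by ring.
    rewrite Hb. ring.
Qed.
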